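(* Let $g,h\in\mathbb F_q[x,y]$ be nonzero with $(x^l-1)(y^m-1)=g(x,y)h(x,y)$ in $\mathbb F_q[x,y]$, and let $C=\langle g\rangle$, $C^*=\langle h^*\rangle$ be the ideals of $\mathfrak R$ generated by the images of $g$ and $h^*$. Assume $C\neq\{0\}$ and $C^*\ne\{0\}$. Then $C\subseteq C^*$ if and only if $(x^l-1)(y^m-1)$ divides $g(x,y)g^*(x,y)$ in $\mathbb F_q[x,y]$.
   Context: $\mathfrak R=\mathbb F_q[x,y]/\langle x^l-1,y^m-1\rangle$. For nonzero $f\in\mathbb F_q[x,y]$ with $l_1=\deg_x f$, $l_2=\deg_y f$, the reciprocal polynomial is $f^*(x,y)=x^{l_1}y^{l_2}f(x^{-1},y^{-1})$. *)

(* Defs.v *)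
(* F_q[x,y] is modelled as {poly {poly F}}:
   the outer variable is y ('X), the inner variable is x ('X%:P). *)
From HB Require Import structures.
From mathcomp Require Import all_boot all_order all_algebra all_field.
Set Implicit Arguments. Unset Strict Implicit. Unset Printing Implicit Defensive.
Import GRing.Theory.
Local Open Scope ring_scope.

Section Bivariate.
Variable F : fieldType.

Definition xvar : {poly {poly F}} := ('X)%:P.
Definition yvar : {poly {poly F}} := 'X.

Definition degy (f : {poly {poly F}}) : nat := (size f).-1.
Definition degx (f : {poly {poly F}}) : nat := (\max_(j < size f) (size (f`_j)%R).-1)%N.

Definition bcoef (f : {poly {poly F}}) (i j : nat) : F := (f`_j)`_i.

(* reciprocal polynomial f^*(x,y) = x^{deg_x f} y^{deg_y f} f(1/x,1/y):
   its coefficient of x^i y^j is the coefficient of x^(l1-i) y^(l2-j) in f. *)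
Definition recip (f : {poly {poly F}}) : {poly {poly F}} :=
  \poly_(j < (degy f).+1) \poly_(i < (degx f).+1)
     bcoef f (degx f - i) (degy f - j).

(* congruence modulo the ideal <x^l - 1, y^m - 1>, i.e. equality in
   R = F[x,y]/<x^l-1, y^m-1> *)
Definition modR (l m : nat) (p q : {poly {poly F}}) : Prop :=
  exists u v : {poly {poly F}},
    p - q = u * (xvar ^+ l - 1) + v * (yvar ^+ m - 1).

(* the ideal <g> of R generated by the image of g, represented by the
   set of its preimages in F[x,y] *)
Definition idealR (l m : nat) (g : {poly {poly F}}) (p : {poly {poly F}}) : Prop :=
  exists a : {poly {poly F}}, modR l m p (a * g).

Definition idealR_nonzero (l m : nat) (g : {poly {poly F}}) : Prop :=
  exists p, idealR l m g p /\ ~ modR l m p 0.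

Definition idealR_sub (l m : nat) (g h : {poly {poly F}}) : Prop :=
  forall p, idealR l m g p -> idealR l m h p.

Definition bdvd (d p : {poly {poly F}}) : Prop := exists k, p = k * d.

End Bivariate.

(* Main.v *)
Require Import Defs.
From HB Require Import structures.
From mathcomp Require Import all_boot all_order all_algebra all_field.
From mathcomp Require Import zify.
From Stdlib Require Import Classical.
Set Implicit Arguments. Unset Strict Implicit. Unset Printing Implicit Defensive.
Import GRing.Theory.
Local Open Scope ring_scope.

Section Univ.
Variable F : fieldType.
Implicit Types p q : {poly F}.

Definition rv (N : nat) p : {poly F} := \poly_(i < N.+1) p`_(N - i).

Lemma coef_rv N p k : (rv N p)`_k = if (k <= N)%N then p`_(N - k) else 0.
Proof. by rewrite coef_poly ltnS. Qed.

Lemma rvD N p q : rv N (p + q) = rv N p + rv N q.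
Proof. apply/polyP=> k; rewrite coefD !coef_rv coefD; by case: ifP; rewrite ?addr0. Qed.

Lemma rvZ N c p : rv N (c *: p) = c *: rv N p.
Proof. apply/polyP=> k; rewrite coefZ !coef_rv coefZ; by case: ifP; rewrite ?mulr0. Qed.

Lemma rv_sum N (I : finType) (G : I -> {poly F}) :
  rv N (\sum_i G i) = \sum_i rv N (G i).
Proof.
apply: (big_ind2 (fun x y => rv N x = y)) => //.
  by apply/polyP=> k; rewrite coef_rv coef0 coef0; case: ifP.
by move=> x1 x2 y1 y2 <- <-; rewrite rvD.
Qed.

Lemma rvXnM a b i q : (i <= a)%N -> (size q <= b.+1)%N ->
  rv (a + b) ('X^i * q) = 'X^(a - i) * rv b q.
Proof.
move=> ia sq; apply/polyP=> k; rewrite coef_rv coefXnM coefXnM coef_rv.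
case: (leqP k (a + b)) => kab.
  case: (ltnP (a + b - k) i) => h1.
    case: (ltnP k (a - i)) => h2 //.
    by rewrite ifF //; apply/negbTE; rewrite -ltnNge; lia.
  case: (ltnP k (a - i)) => h2.
    by rewrite nth_default //; apply: leq_trans sq _; lia.
  rewrite ifT; last lia.
  congr (q`_ _); lia.
case: (ltnP k (a - i)) => h2 //.
by rewrite ifF //; apply/negbTE; rewrite -ltnNge; lia.
Qed.

Lemma rvM a b p q : (size p <= a.+1)%N -> (size q <= b.+1)%N ->
  rv (a + b) (p * q) = rv a p * rv b q.
Proof.
move=> sp sq.
have pE : p = \sum_(i < a.+1) p`_i *: 'X^i.
  apply/polyP=> k; rewrite coef_sum.
  under eq_bigr do rewrite coefZ coefXn.
  case: (ltnP k a.+1) => hk.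
    rewrite (bigD1 (Ordinal hk)) //= eqxx mulr1 big1 ?addr0 // => j /eqP ne.
    by rewrite (_ : (k == j :> nat) = false) ?mulr0 //; apply/eqP => e; apply: ne; apply: val_inj.
  rewrite nth_default; last by apply: leq_trans sp hk.
  by rewrite big1 // => j _; rewrite (_ : (k == j :> nat) = false) ?mulr0 //; apply/eqP => e; move: (ltn_ord j); lia.
rewrite {1}pE mulr_suml rv_sum.
have -> : rv a p = \sum_(i < a.+1) p`_i *: 'X^(a - i).
  rewrite {1}pE rv_sum; apply: eq_bigr => i _; rewrite rvZ; congr (_ *: _).
  have := rvXnM (a := a) (b := 0) (q := 1) (ltn_ord i).
  rewrite addn0 mulr1 => ->; last by rewrite size_poly1.
  have -> : rv 0 1 = 1 :> {poly F}.
    by apply/polyP=> k; rewrite coef_rv coefC; case: k => [|k] //=; rewrite coefC.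
  by rewrite mulr1.
rewrite mulr_suml; apply: eq_bigr => i _.
rewrite -scalerAl rvZ.
by rewrite (@rvXnM a b i q (ltn_ord i) sq) scalerAl.
Qed.

Lemma rvX1 l : (0 < l)%N -> rv l ('X^l - 1) = - ('X^l - 1) :> {poly F}.
Proof.
move=> l0; apply/polyP=> k; rewrite coef_rv coefN !coefB !coefXn !coef1.
case: (leqP k l) => kl.
  have -> : (l - k == l)%N = (k == 0)%N by apply/eqP/eqP; lia.
  have -> : (l - k == 0)%N = (k == l)%N by apply/eqP/eqP; lia.
  by rewrite opprB.
have -> : (k == l)%N = false by apply/eqP; lia.
have -> : (k == 0)%N = false by apply/eqP; lia.
by rewrite subrr oppr0.
Qed.

Definition rev1 p := rv (size p).-1 p.

Lemma rev_pair (a a' : {poly F}) c l : (0 < l)%N -> c != 0 ->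
  a * a' = c *: ('X^l - 1) -> rev1 a * rev1 a' = (- c) *: ('X^l - 1).
Proof.
move=> l0 c0 e.
have sX : size ('X^l - 1 : {poly F}) = l.+1 by rewrite -polyC1 size_XnsubC.
have sP : size (a * a') = l.+1 by rewrite e size_scale.
have a0 : a != 0 by apply/eqP => a0; move: sP; rewrite a0 mul0r size_poly0.
have a'0 : a' != 0 by apply/eqP => e0; move: sP; rewrite e0 mulr0 size_poly0.
rewrite size_mul // in sP.
have Hs : ((size a).-1 + (size a').-1)%N = l.
  have h1 : (0 < size a)%N by rewrite size_poly_gt0.
  have h2 : (0 < size a')%N by rewrite size_poly_gt0.
  move: sP h1 h2; case: (size a) => [|x] //; case: (size a') => [|y] //= *; lia.
rewrite /rev1 -rvM ?leqSpred // Hs e rvZ rvX1 //.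
by rewrite scalerN scaleNr.
Qed.

End Univ.

Section Biv.
Variable F : fieldType.

Lemma exists_irr (W : {poly F}) : (1 < size W)%N ->
  exists p, irreducible_poly p /\ p %| W.
Proof.
move: {2}(size W) (leqnn (size W)) => n; elim: n W => [|n IH] W sW s1; first lia.
case: (classic (irreducible_poly W)) => [irr|nirr]; first by exists W; rewrite dvdpp.
have : exists q : {poly F}, size q != 1%N /\ q %| W /\ ~~ (q %= W).
  apply: NNPP => hn; apply: nirr; split => // q sq qW; apply/negPn/negP => hq.
  by apply: hn; exists q.
case=> q [sq [qW nq]].
have W0 : W != 0 by rewrite -size_poly_gt0; lia.
have q0 : q != 0 by apply/eqP => q0; move: qW; rewrite q0 dvd0p (negbTE W0).
have sqW : (size q < size W)%N.
  rewrite ltn_neqAle dvdp_leq // andbT; by rewrite dvdp_size_eqp.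
have sq0 : (0 < size q)%N by rewrite size_poly_gt0.
have sq1 : (1 < size q)%N by move/eqP: sq => sq; lia.
have sqn : (size q <= n)%N by lia.
have [p [ip pq]] := IH q sqn sq1.
by exists p; split => //; apply: dvdp_trans pq qW.
Qed.

Lemma euclid (p : {poly F}) (u v : {poly {poly F}}) : irreducible_poly p ->
  (forall j, p %| (u * v)`_j) -> (forall j, p %| u`_j) \/ (forall j, p %| v`_j).
Proof.
move=> ip H; apply: NNPP => hn.
have exu : exists i, ~~ (p %| u`_i).
  apply: NNPP => h1; apply: hn; left => j; apply/negPn/negP => h2; apply: h1; by exists j.
have exv : exists i, ~~ (p %| v`_i).
  apply: NNPP => h1; apply: hn; right => j; apply/negPn/negP => h2; apply: h1; by exists j.
case: (ex_minnP exu) => i ui imin; case: (ex_minnP exv) => k vk kmin.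
have := H (i + k)%N; rewrite coefM.
have hi : (i < (i + k).+1)%N by lia.
rewrite (bigD1 (Ordinal hi)) //= addKn dvdp_addl.
  rewrite Gauss_dvdpl; first by rewrite (negbTE ui).
  by rewrite irreducible_poly_coprime.
apply: (big_ind (fun x => p %| x)); [exact: dvdp0 | by move=> x y; apply: dvdp_add | move=> j /eqP nej].
have nej' : (j : nat) != i by apply/eqP => e; apply: nej; apply: val_inj.
case: (ltnP j i) => hj.
  apply: dvdp_mulr; apply/negPn/negP => hu; have := imin _ hu; lia.
apply: dvdp_mull; apply/negPn/negP => hv; have := kmin _ hv.
have := ltn_ord j; move/eqP: nej' => nej'; lia.
Qed.

Lemma swapXY_sep (a b : {poly F}) : swapXY (a%:P * b^:P) = b%:P * a^:P.
Proof. by rewrite rmorphM /= swapXY_polyC swapXY_map_polyC mulrC. Qed.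

Lemma coef_sep (a b : {poly F}) j : (a%:P * b^:P)`_j = a * (b`_j)%:P.
Proof. by rewrite coefCM coef_map. Qed.

Lemma sep (u v : {poly {poly F}}) (W Z : {poly F}) :
  u * v = W%:P * Z^:P -> W != 0 -> Z != 0 -> exists a b : {poly F}, u = a%:P * b^:P.
Proof.
move: {2}(size W) (leqnn (size W)) => n; elim: n u v W => [|n IH] u v W sW e W0 Z0.
  by move: sW; rewrite leqn0 size_poly_eq0 (negbTE W0).
case: (leqP (size W) 1) => s1.
  have u0 : u != 0 by apply/eqP => u0; move: e; rewrite u0 mul0r => /esym/eqP;
    rewrite mulf_eq0 polyC_eq0 map_poly_eq0 (negbTE W0) (negbTE Z0).
  have v0 : v != 0 by apply/eqP => v0; move: e; rewrite v0 mulr0 => /esym/eqP;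
    rewrite mulf_eq0 polyC_eq0 map_poly_eq0 (negbTE W0) (negbTE Z0).
  have e' := congr1 (@swapXY _) e; rewrite rmorphM /= swapXY_sep in e'.
  have sW1 : size W = 1%N by have := size_poly_gt0 W; rewrite W0; lia.
  have : size (swapXY u * swapXY v) = 1%N.
    by rewrite e' size_Cmul ?polyC_eq0 // size_map_polyC.
  rewrite size_mul ?swapXY_eq0 //.
  have := size_poly_gt0 (swapXY u); have := size_poly_gt0 (swapXY v).
  rewrite !swapXY_eq0 u0 v0 => h1 h2 hs.
  have hsu : size (swapXY u) = 1%N.
    move: hs h1 h2; case: (size (swapXY u)) => [|x] //; case: (size (swapXY v)) => [|y] //= *; lia.
  have /size_poly1P [c _ ec] : size (swapXY u) == 1%N by apply/eqP.
  exists 1, c; rewrite -[u]swapXYK ec swapXY_polyC.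
  by rewrite mul1r.
have [p [ip pW]] := exists_irr s1.
have p0 : p != 0 by apply: irredp_neq0.
have sp : (1 < size p)%N by case: ip.
set W' := W %/ p.
have eW : W = W' * p by rewrite divpK.
have W'0 : W' != 0 by apply/eqP => w; move: W0; rewrite eW w mul0r eqxx.
have sW' : (size W' <= n)%N.
  rewrite size_divp // -subn1; move: sW sp; set a := size W; set b := size p; lia.
have hd : forall j, p %| (u * v)`_j.
  by move=> j; rewrite e coef_sep eW -mulrA mulrCA dvdp_mulIl.
have divE : forall w : {poly {poly F}}, (forall j, p %| w`_j) ->
    w = p%:P * map_poly (fun c => c %/ p) w.
  move=> w hw; apply/polyP => j; rewrite coefCM coef_map_id0 ?div0p //.
  by rewrite divpKC.
have eW' : W%:P * Z^:P = p%:P * (W'%:P * Z^:P) by rewrite mulrA -polyCM (mulrC p) -eW.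
case: (euclid ip hd) => [hu|hv].
  set u1 := map_poly (fun c => c %/ p) u.
  have eu := divE _ hu; rewrite -/u1 in eu.
  have e1 : u1 * v = W'%:P * Z^:P.
    apply: (mulfI (x := p%:P)); first by rewrite polyC_eq0.
    by rewrite mulrA -eu e eW'.
  have [a [b eab]] := IH _ _ _ sW' e1 W'0 Z0.
  by exists (p * a), b; rewrite eu eab polyCM mulrA.
set v1 := map_poly (fun c => c %/ p) v.
have ev := divE _ hv; rewrite -/v1 in ev.
have e1 : u * v1 = W'%:P * Z^:P.
  apply: (mulfI (x := p%:P)); first by rewrite polyC_eq0.
  by rewrite mulrCA -ev e eW'.
exact: IH _ _ _ sW' e1 W'0 Z0.
Qed.


Lemma sep_const (s t X Y : {poly F}) : s%:P * t^:P = X%:P * Y^:P ->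
  Y`_0 != 0 -> X != 0 -> exists c, c != 0 /\ s = c *: X.
Proof.
move=> e Y0 X0.
have e0 := congr1 (fun w : {poly {poly F}} => w`_0) e; rewrite /= !coef_sep in e0.
have t0 : t`_0 != 0.
  apply/eqP => t0; move: e0; rewrite t0 mulr0 => /esym/eqP.
  by rewrite mulf_eq0 polyC_eq0 (negbTE X0) (negbTE Y0).
exists (Y`_0 / t`_0); split; first by rewrite mulf_neq0 // invr_eq0.
have -> : s = s * (t`_0)%:P * ((t`_0)^-1)%:P by rewrite -mulrA -polyCM mulfV // mulr1.
by rewrite e0 -mulrA -polyCM mulrC mul_polyC.
Qed.

Lemma size_sep (a b : {poly F}) : a != 0 -> size (a%:P * b^:P) = size b.
Proof. by move=> a0; rewrite size_Cmul ?polyC_eq0 // size_map_polyC. Qed.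

Lemma degx_sep (a b : {poly F}) : a != 0 -> b != 0 ->
  degx (a%:P * b^:P) = (size a).-1.
Proof.
move=> a0 b0; rewrite /degx size_sep //.
have sf : forall j, size (a%:P * b^:P)`_j = if b`_j == 0 then 0%N else size a.
  move=> j; rewrite coef_sep mulrC mul_polyC.
  case: eqP => [->|/eqP bj]; first by rewrite scale0r size_poly0.
  by rewrite size_scale.
apply/eqP; rewrite eqn_leq; apply/andP; split.
  apply/bigmax_leqP => j _; rewrite sf; by case: ifP.
have sb : ((size b).-1 < size b)%N by rewrite prednK // size_poly_gt0.
apply: leq_trans (leq_bigmax_cond (Ordinal sb) isT); rewrite /= sf.
by rewrite -lead_coefE lead_coef_eq0 (negbTE b0).
Qed.

Lemma recip_sep (a b : {poly F}) : a != 0 -> b != 0 ->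
  recip (a%:P * b^:P) = (rev1 a)%:P * (rev1 b)^:P.
Proof.
move=> a0 b0; rewrite /recip degx_sep // /degy size_sep //.
apply/polyP => j; rewrite coef_poly coef_sep.
apply/polyP => i; rewrite coefMC /rev1 !coef_rv ltnS.
case: (leqP j (size b).-1) => hj; last by rewrite coef0 mulr0.
rewrite coef_poly ltnS; case: (leqP i (size a).-1) => hi; last by rewrite mul0r.
by rewrite /bcoef coef_sep coefMC.
Qed.

Lemma key (X Y a b a2 b2 : {poly F}) (al u v : {poly {poly F}}) :
  Y \is monic -> a2 %| X -> ~~ (Y %| b) ->
  a%:P * b^:P - al * (a2%:P * b2^:P) = u * X%:P + v * Y^:P -> a2 %| a.
Proof.
move=> mY a2X nb e.
have md : Y^:P \is monic by apply: monic_map.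
set r := b %% Y.
have Y0 : Y != 0 by apply: monic_neq0.
have hr : Pdiv.CommonRing.rmodp b^:P Y^:P = r^:P.
  rewrite {1}(divp_eq b Y) rmorphD rmorphM /= Pdiv.RingMonic.rmodp_addl_mul_small //.
  by rewrite !size_map_polyC ltn_modp.
have e' := congr1 (fun w => Pdiv.CommonRing.rmodp w Y^:P) e.
rewrite /= (Pdiv.RingMonic.rmodpB md) !(Pdiv.RingMonic.rmodpD md) in e'.
rewrite (Pdiv.RingMonic.rmodp_mull md) addr0 in e'.
rewrite mul_polyC (Pdiv.RingMonic.rmodpZ md) hr in e'.
rewrite mulrCA mul_polyC (Pdiv.RingMonic.rmodpZ md) in e'.
rewrite (mulrC u) mul_polyC (Pdiv.RingMonic.rmodpZ md) in e'.
have r0 : r != 0 by rewrite /r -/(dvdp Y b).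
set j := (size r).-1.
have rj : r`_j != 0 by rewrite /j -lead_coefE lead_coef_eq0.
have ej := congr1 (fun w : {poly {poly F}} => w`_j) e'.
rewrite /= coefB !coefZ coef_map /= in ej.
have -> : a = (r`_j)^-1 *: (a * (r`_j)%:P).
  by rewrite mulrC mul_polyC scalerA mulVf // scale1r.
rewrite dvdpZr ?invr_eq0 //.
move: ej; set w1 := (Pdiv.CommonRing.rmodp (al * b2^:P) Y^:P)`_j.
set w2 := (Pdiv.CommonRing.rmodp u Y^:P)`_j => ej.
have -> : a * (r`_j)%:P = X * w2 + a2 * w1 by rewrite -ej subrK.
by rewrite dvdp_add // ?dvdp_mulIl // dvdp_mulr.
Qed.

Lemma dvd_split (X Y p q : {poly F}) (k : {poly {poly F}}) :
  p%:P * q^:P = k * (X%:P * Y^:P) -> q != 0 -> X %| p.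
Proof.
move=> e q0.
set j := (size q).-1.
have qj : q`_j != 0 by rewrite /j -lead_coefE lead_coef_eq0.
have ej := congr1 (fun w : {poly {poly F}} => w`_j) e.
rewrite /= coef_sep mulrCA coefCM in ej.
have -> : p = (q`_j)^-1 *: (p * (q`_j)%:P).
  by rewrite mulrC mul_polyC scalerA mulVf // scale1r.
by rewrite dvdpZr ?invr_eq0 // ej dvdp_mulIl.
Qed.

End Biv.

Lemma sep_mul (F : fieldType) (a b a' b' : {poly F}) :
  (a%:P * b^:P) * (a'%:P * b'^:P) = (a * a')%:P * (b * b')^:P.
Proof. by rewrite !rmorphM /= mulrACA. Qed.

Lemma rev_div (F : fieldType) (X a A A' : {poly F}) c : c != 0 -> X != 0 ->
  A * A' = c *: X -> (X %| a * A) = (A' %| a).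
Proof.
move=> c0 X0 e; apply/idP/idP.
  case/dvdpP => k ek.
  have : (c *: a) * X = (k * A') * X.
    by rewrite -scalerAl scalerAr -e mulrA ek -!mulrA (mulrC X).
  move/(mulIf X0) => e2.
  by rewrite -(dvdpZr _ _ c0) e2 dvdp_mulIr.
case/dvdpP => k ->.
by rewrite -mulrA (mulrC A') e -scalerAr dvdpZr // dvdp_mulIr.
Qed.

Unset Implicit Arguments. Set Strict Implicit.

Theorem mainTheorem5 (F : finFieldType) (l m : nat) (g h : {poly {poly F}}) :
  g != 0 -> h != 0 ->
  (xvar F ^+ l - 1) * (yvar F ^+ m - 1) = g * h ->
  idealR_nonzero l m g ->
  idealR_nonzero l m (recip h) ->
  (idealR_sub l m g (recip h) <->
   bdvd ((xvar F ^+ l - 1) * (yvar F ^+ m - 1)) (g * recip g)).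
Proof.
move=> g0 h0 e nzg _.
pose X : {poly F} := 'X^l - 1.
pose Y : {poly F} := 'X^m - 1.
have eX : xvar F ^+ l - 1 = X%:P by rewrite /xvar /X rmorphB /= rmorphXn /= rmorph1.
have eY : yvar F ^+ m - 1 = Y^:P.
  by rewrite /yvar /Y rmorphB /= rmorphXn /= map_polyX rmorph1.
rewrite /idealR_sub /bdvd /idealR /modR eX eY.
rewrite eX eY in e.
have l0 : (0 < l)%N.
  case: (posnP l) => // l0; move: e; rewrite /X l0 expr0 subrr mul0r => /esym/eqP.
  by rewrite mulf_eq0 (negbTE g0) (negbTE h0).
have m0 : (0 < m)%N.
  case: (posnP m) => // m0; move: e; rewrite /Y m0 expr0 subrr rmorph0 mulr0 => /esym/eqP.
  by rewrite mulf_eq0 (negbTE g0) (negbTE h0).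
have X0 : X != 0 by rewrite -size_poly_eq0 /X -polyC1 size_XnsubC.
have Y0 : Y != 0 by rewrite -size_poly_eq0 /Y -polyC1 size_XnsubC.
have mX : X \is monic by rewrite /X -polyC1 monicXnsubC.
have mY : Y \is monic by rewrite /Y -polyC1 monicXnsubC.
have Xc0 : X`_0 != 0.
  by rewrite /X coefB coefXn coef1 eqxx (_ : (0 == l)%N = false) ?sub0r ?oppr_eq0 ?oner_eq0 //; lia.
have Yc0 : Y`_0 != 0.
  by rewrite /Y coefB coefXn coef1 eqxx (_ : (0 == m)%N = false) ?sub0r ?oppr_eq0 ?oner_eq0 //; lia.
have [a [b eg]] := sep (esym e) X0 Y0.
have [a' [b' eh]] : exists a b : {poly F}, h = a%:P * b^:P.
  by apply: (@sep _ h g X Y) => //; rewrite mulrC -e.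
have eP : (a * a')%:P * (b * b')^:P = X%:P * Y^:P by rewrite -sep_mul -eg -eh e.
have eP' : (b * b')%:P * (a * a')^:P = Y%:P * X^:P.
  by rewrite -swapXY_sep eP swapXY_sep.
have [c [c0 eaa]] := sep_const eP Yc0 X0.
have [d [d0 ebb]] := sep_const eP' Xc0 Y0.
have ha : a != 0 by apply/eqP => a0; move: g0; rewrite eg a0 mul0r eqxx.
have hb : b != 0 by apply/eqP => a0; move: g0; rewrite eg a0 rmorph0 mulr0 eqxx.
have ha' : a' != 0 by apply/eqP => a0; move: h0; rewrite eh a0 mul0r eqxx.
have hb' : b' != 0 by apply/eqP => a0; move: h0; rewrite eh a0 rmorph0 mulr0 eqxx.
have eAA := rev_pair l0 c0 eaa.
have eBB := rev_pair m0 d0 ebb.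
set A := rev1 a in eAA; set B := rev1 b in eBB.
set A' := rev1 a' in eAA; set B' := rev1 b' in eBB.
have nc : - c != 0 by rewrite oppr_eq0.
have nd : - d != 0 by rewrite oppr_eq0.
have hB : B != 0.
  by apply/eqP => b0; move: eBB; rewrite b0 mul0r => /esym/eqP; rewrite scaler_eq0 (negbTE nd) (negbTE Y0).
have hAn : A != 0.
  by apply/eqP => b0; move: eAA; rewrite b0 mul0r => /esym/eqP; rewrite scaler_eq0 (negbTE nc) (negbTE X0).
have rg : recip g = A%:P * B^:P by rewrite eg recip_sep.
have rh : recip h = A'%:P * B'^:P by rewrite eh recip_sep.
have A'X : A' %| X by rewrite -(dvdpZr _ _ nc) -eAA dvdp_mulIr.
have B'Y : B' %| Y by rewrite -(dvdpZr _ _ nd) -eBB dvdp_mulIr.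
have hA := rev_div a nc X0 eAA.
have hBB := rev_div b nd Y0 eBB.
have egg : g * recip g = (a * A)%:P * (b * B)^:P by rewrite rg eg sep_mul.
rewrite egg rh; split.
- move=> sub.
  have hg : exists a0, exists u v : {poly {poly F}}, g - a0 * g = u * X%:P + v * Y^:P.
    by exists 1, 0, 0; rewrite mul1r subrr !mul0r addr0.
  have [al [u [v euv]]] := sub g hg.
  have nb : ~~ (Y %| b).
    apply/negP => /dvdpP [kb ekb].
    case: nzg => p [[a0 [u0 [v0 hp]]]]; apply.
    exists u0, (v0 + a0 * (a%:P * kb^:P)).
    rewrite subr0 -[p](subrK (a0 * g)) hp eX eY eg ekb rmorphM /=.
    by rewrite mulrDl -!mulrA -addrA.
  have na : ~~ (X %| a).
    apply/negP => /dvdpP [ka eka].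
    case: nzg => p [[a0 [u0 [v0 hp]]]]; apply.
    exists (u0 + a0 * (ka%:P * b^:P)), v0.
    rewrite subr0 -[p](subrK (a0 * g)) hp eX eY eg eka rmorphM /=.
    by rewrite mulrDl (mulrC ka%:P) -!mulrA addrAC [X%:P * _]mulrC -mulrA.
  rewrite eg in euv.
  have dA : A' %| a := key mY A'X nb euv.
  have euv' := congr1 (@swapXY _) euv.
  rewrite rmorphB rmorphD !rmorphM /= !swapXY_polyC !swapXY_map_polyC (mulrC a^:P) (mulrC A'^:P) (addrC (swapXY u * _)) in euv'.
  have dB : B' %| b := key mX B'Y na euv'.
  rewrite -hA in dA; rewrite -hBB in dB.
  case/dvdpP: dA => k1 ->; case/dvdpP: dB => k2 ->.
  by exists (k1%:P * k2^:P); rewrite -sep_mul.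
- case=> k ek.
  have XaA : X %| a * A.
    apply: (dvd_split ek); by rewrite mulf_neq0.
  have ek' : (b * B)%:P * (a * A)^:P = swapXY k * (Y%:P * X^:P).
    by rewrite -(swapXY_sep (a * A)) -(swapXY_sep X Y) -rmorphM ek.
  have YbB : Y %| b * B by apply: (dvd_split ek'); rewrite mulf_neq0.
  rewrite hA in XaA; rewrite hBB in YbB.
  case/dvdpP: XaA => k1 ea; case/dvdpP: YbB => k2 eb.
  move=> p [a0 [u0 [v0 hp]]]; exists (a0 * (k1%:P * k2^:P)), u0, v0.
  by rewrite -hp eg ea eb -sep_mul !mulrA.
Qed.
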